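(* Let $(T,D)$ be a predominated tree. (i) $(T,D)$ is MBD critical if and only if there exists a substructure $F\in\mathcal S$ in $T$ such that $D=V(T)\setminus X(F)$. (ii) $(T,D)$ is an atomic MBD critical graph if and only if $T\in\mathcal S$ and $D=V(T)\setminus X(T)$.
   Context: A predominated graph is a pair $(G,D)$ with $G$ a finite simple graph and $D\subseteq V(G)$. In the MBD game on $(G,D)$, Staller and Dominator alternately claim unclaimed vertices of $V(G)$ (including vertices of $D$), Staller first, until all are claimed; Staller wins if she claims all of $N_G[v]$ for some $v\in V(G)\setminus D$, Dominator wins otherwise. $(G,D)$ is MBD critical if Staller wins on $(G,D)$ but Dominator wins on $(G,D\cup\{v\})$ for every $v\in V(G)\setminus D$. $(G,D)$ is atomic MBD critical if it is MBD critical, $D$ is an independent set of $G$, and no vertex of $D$ is isolated in $G$. For a tree $T'$, $S(T')$ is obtained by subdividing each edge of $T'$ exactly once; $\mathcal S=\{S(T'):T'\text{ a tree}\}$ and $X(S(T'))=V(T')$ (with $S(P_1)=P_1$, $X(P_1)=V(P_1)$). $F\in\mathcal S$ is a substructure in $G$ if $F$ is a subgraph of $G$ and $\deg_G(v)=\deg_F(v)$ for all $v\in X(F)$. *)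

(* Defs.v *)
From mathcomp Require Import all_boot.
Set Implicit Arguments.
Unset Strict Implicit.
Unset Printing Implicit Defensive.

Section Graphs.
Variable V : finType.
Implicit Types (e : rel V) (D S C : {set V}).

Definition simple_graph e : Prop := irreflexive e /\ symmetric e.
Definition is_connected e : Prop := forall x y : V, connect e x y.
Definition acyclic e : Prop :=
  forall s : seq V, 3 <= size s -> uniq s -> ~~ cycle e s.
Definition is_tree e : Prop :=
  [/\ simple_graph e, 0 < #|V|, is_connected e & acyclic e].

Definition cnbhd e (v : V) : {set V} := [set u | (u == v) || e v u].
Definition deg e (v : V) : nat := #|[set u | e v u]|.

Definition staller_claimed_nbhd e D S : bool :=
  [exists v, (v \notin D) && (cnbhd e v \subset S)].

(* [mbd_from e D n S C sturn]: Staller wins (with optimal play) from the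
   position where C is the set of claimed vertices, S the set claimed by
   Staller, and [sturn] says whether Staller moves next; n is fuel
   (at least the number of unclaimed vertices). *)
Fixpoint mbd_from e D (n : nat) S C (sturn : bool) : bool :=
  if n is n'.+1 then
    if [exists x, x \notin C] then
      if sturn then
        [exists x, (x \notin C) && mbd_from e D n' (x |: S) (x |: C) false]
      else
        [forall x, (x \notin C) ==> mbd_from e D n' S (x |: C) true]
    else staller_claimed_nbhd e D S
  else staller_claimed_nbhd e D S.

Definition staller_wins e D : bool := mbd_from e D #|V| set0 set0 true.
Definition dominator_wins e D : bool := ~~ staller_wins e D.

Definition mbd_critical e D : Prop :=
  staller_wins e D /\ forall v, v \notin D -> dominator_wins e (v |: D).

Definition atomic_mbd_critical e D : Prop :=
  [/\ mbd_critical e D,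
      (forall u w, u \in D -> w \in D -> ~~ e u w) &
      (forall u, u \in D -> exists w, e u w)].
End Graphs.

(* ---------- Subdivision S(T') of a graph (W, f) ----------
   vertices: inl a (original vertices, a : W) and inr {a,b} for each edge ab
   of f (the subdivision vertex of that edge). *)
Section Subdivision.
Variable W : finType.
Variable f : rel W.

Definition sd_valid (z : W + {set W}) : bool :=
  match z with
  | inl _ => true
  | inr A => [exists a, exists b, f a b && (A == [set a; b])]
  end.

Definition sd_edge (z1 z2 : W + {set W}) : bool :=
  match z1, z2 with
  | inl a, inr A => sd_valid (inr A) && (a \in A)
  | inr A, inl a => sd_valid (inr A) && (a \in A)
  | _, _ => false
  end.
End Subdivision.

Section Embeddings.
Variables (V W : finType) (e : rel V) (f : rel W).
Variable phi : W + {set W} -> V.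

Definition sd_subgraph (phi : W + {set W} -> V) : Prop :=
  (forall z1 z2, sd_valid f z1 -> sd_valid f z2 -> phi z1 = phi z2 -> z1 = z2)
  /\ (forall z1 z2, sd_valid f z1 -> sd_valid f z2 -> sd_edge f z1 z2 ->
        e (phi z1) (phi z2)).

Definition F_edge (u w : V) : bool :=
  [exists z1, exists z2,
     [&& sd_valid f z1, sd_valid f z2, sd_edge f z1 z2,
         phi z1 == u & phi z2 == w]].
Definition F_deg (u : V) : nat := #|[set w | F_edge u w]|.

Definition X_of : {set V} := [set phi (inl a) | a : W].

Definition substructure : Prop :=
  sd_subgraph phi /\ forall v, v \in X_of -> deg e v = F_deg v.

Definition sd_iso : Prop :=
  (forall z1 z2, sd_valid f z1 -> sd_valid f z2 -> phi z1 = phi z2 -> z1 = z2)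
  /\ (forall v, exists2 z, sd_valid f z & phi z = v)
  /\ (forall z1 z2, sd_valid f z1 -> sd_valid f z2 ->
        e (phi z1) (phi z2) = sd_edge f z1 z2).
End Embeddings.

(* Main.v *)
Require Import Defs.
From mathcomp Require Import all_boot.
Set Implicit Arguments.
Unset Strict Implicit.
Unset Printing Implicit Defensive.

Module G1.

Section Game.
Variables (V : finType) (e : rel V) (D : {set V}).

Notation claimed := (staller_claimed_nbhd e D).

Lemma claimed_mono (S S' : {set V}) : S \subset S' -> claimed S -> claimed S'.
Proof.
move=> sub /existsP[v /andP[Hv Hs]]; apply/existsP; exists v.
by rewrite Hv (subset_trans Hs sub).
Qed.

Lemma win_claimed n (S C : {set V}) b : claimed S -> mbd_from e D n S C b.
Proof.
elim: n S C b => [|n IH] S C b H //=.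
case: ifP => // /existsP[x Hx]; case: b.
  apply/existsP; exists x; rewrite Hx /=; apply: IH.
  by apply: claimed_mono H; apply: subsetUr.
by apply/forallP => y; apply/implyP => _; apply: IH.
Qed.

Lemma card_claim z (C : {set V}) : z \notin C -> #|~: (z |: C)|.+1 = #|~: C|.
Proof.
move=> Hz; rewrite (cardsD1 z (~: C)) inE Hz add1n; congr (_.+1).
by apply: eq_card => y; rewrite !inE negb_or andbC.
Qed.

Lemma st_move n (S C : {set V}) x : x \notin C -> #|~: C| <= n ->
  mbd_from e D n.-1 (x |: S) (x |: C) false -> mbd_from e D n S C true.
Proof.
move=> Hx Hn H; case: n Hn H => [|n] Hn H.
  by move: Hn; rewrite -(card_claim Hx).
rewrite /=; have -> : [exists x, x \notin C] by apply/existsP; exists x.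
by apply/existsP; exists x; rewrite Hx.
Qed.

Lemma st_win n (S C : {set V}) x : x \notin C -> #|~: C| <= n -> claimed (x |: S) ->
  mbd_from e D n S C true.
Proof. by move=> Hx Hn H; apply: (st_move Hx Hn); apply: win_claimed. Qed.

Definition stl (Xs : {set V}) r (par con : V -> V) (rk : V -> nat) (S C : {set V}) :=
 [/\ r \in Xs,
  (forall x, x \in Xs -> x \notin D /\ (x \in C -> x \in S)),
  (forall x, x \in Xs -> x != r -> [/\ par x \in Xs, rk (par x) < rk x & (con x \in C -> con x \in S)]),
  (forall x y, x \in Xs -> y \in Xs -> x != r -> y != r -> con x = con y -> x = y) /\
  (forall x, x \in Xs -> x != r -> con x \notin Xs) &
  (forall x w, x \in Xs -> e x w -> [\/ w \in S, (x != r /\ w = con x) | exists y, [/\ y \in Xs, y != r, par y = x & w = con y]])].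

Lemma staller_main k : forall (Xs : {set V}) r par con rk (S C : {set V}) n, #|Xs| <= k ->
  stl Xs r par con rk S C -> #|~: C| <= n -> mbd_from e D n S C true.
Proof.
elim: k => [|k IH] Xs r par con rk S C n Hk [Hr HX Hpar [Hinj Hcon] Hnb] Hn.
  by move: Hk; rewrite leqn0 => /eqP/cards0_eq HX0; rewrite HX0 inE in Hr.
case: (boolP [exists x, (x \in Xs) && (x != r)]) => [/existsP[x0 Hx0]|Hno].
- case: (@arg_maxnP _ x0 (fun y => (y \in Xs) && (y != r)) rk Hx0) => x /andP[HxX Hxr] Hmax.
  have Hnbx w : e x w -> w \in S \/ w = con x.
    case/(Hnb x w HxX) => [|[]|[y [HyX Hyr Hpy ->]]]; [by left|by right|].
    have := Hmax y; rewrite HyX Hyr => /(_ isT).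
    by case: (Hpar y HyX Hyr) => _; rewrite Hpy => /leq_trans H _ /H; rewrite ltnn.
  have [HxD HxC] := HX x HxX.
  have [_ _ HcC] := Hpar x HxX Hxr.
  set c := con x in Hnbx HcC.
  have Hw (S' : {set V}) : x \in S' -> c \in S' -> S \subset S' -> claimed S'.
    move=> H1 H2 H3; apply/existsP; exists x; rewrite HxD /=.
    apply/subsetP => w; rewrite inE => /orP[/eqP->//|/Hnbx[]]; last by move->.
    by move/(subsetP H3).
  have Hxc : x != c by apply/eqP => Exc; move: (Hcon x HxX Hxr); rewrite -/c -Exc HxX.
  case: (boolP (x \in S)) => HxS; case: (boolP (c \in S)) => HcS.
  + by apply: win_claimed; apply: Hw => //; apply: subxx.
  + have HcC' : c \notin C by apply: contra HcS.
    apply: (st_win HcC' Hn); apply: Hw; rewrite ?inE ?HxS ?eqxx ?orbT //.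
    exact: subsetUr.
  + have HxC' : x \notin C by apply: contra HxS.
    apply: (st_win HxC' Hn); apply: Hw; rewrite ?inE ?HcS ?eqxx ?orbT //.
    exact: subsetUr.
  + have HxC' : x \notin C by apply: contra HxS.
    have HcC' : c \notin C by apply: contra HcS.
    have HxC2 : x \notin c |: C by rewrite !inE negb_or Hxc HxC'.
    case: n Hn => [|n] Hn; first by move: Hn; rewrite -(card_claim HcC').
    apply: (st_move HcC' Hn) => /=.
    have Hn2 : #|~: (c |: C)| <= n by rewrite -ltnS (card_claim HcC').
    case: n Hn Hn2 => [|n] Hn Hn2; first by move: Hn2; rewrite -(card_claim HxC2).
    rewrite /=; have -> : [exists x, x \notin c |: C] by apply/existsP; exists x.
    apply/forallP => z; apply/implyP => Hz.
    have Hn3 : #|~: (z |: (c |: C))| <= n by move: Hn2; rewrite -(card_claim Hz).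
    case: (eqVneq z x) => [Ezx|Nzx].
    * subst z.
      apply: (IH (Xs :\ x) r par con rk) => //.
        by move: Hk; rewrite (cardsD1 x Xs) HxX.
      split.
      -- by rewrite !inE Hr eq_sym Hxr.
      -- move=> y; rewrite !inE => /andP[Hyx HyX]; have [? HyC] := HX y HyX; split=> //.
         rewrite (negbTE Hyx) /= => /orP[/eqP Hyc|/HyC ->]; last by rewrite orbT.
         by move: (Hcon x HxX Hxr); rewrite -/c -Hyc HyX.
      -- move=> y; rewrite !inE => /andP[Hyx HyX] Hyr; have [Hp Hrk HyC] := Hpar y HyX Hyr.
         split=> //.
         ++ rewrite Hp andbT; apply/eqP => Hpx.
            by have := Hmax y; rewrite HyX Hyr -Hpx => /(_ isT) /= H; move: Hrk; rewrite ltnNge H.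
         ++ rewrite ?inE => /or3P[/eqP Hcx|/eqP->|/HyC->]; last by rewrite orbT.
            ** by move: (Hcon y HyX Hyr); rewrite Hcx HxX.
            ** by rewrite eqxx.
      -- split; first by move=> y1 y2; rewrite !inE => /andP[_ H1] /andP[_ H2]; apply: Hinj.
         move=> y; rewrite !inE => /andP[_ H1] H2; rewrite negb_and (Hcon y H1 H2) orbT //.
      -- move=> y w; rewrite !inE => /andP[Hyx HyX] Hyw.
         case: (Hnb y w HyX Hyw) => [->|[]|[y' [Hy'X Hy'r Hpy' ->]]].
         ++ by apply: Or31; rewrite orbT.
         ++ by move=> ? ->; apply: Or32.
         ++ case: (eqVneq y' x) => [->|Ny'x].
            ** by apply: Or31; rewrite eqxx.
            ** by apply: Or33; exists y'; rewrite !inE Ny'x Hy'X.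
    * have HxC3 : x \notin z |: (c |: C) by rewrite !inE !negb_or (eq_sym x z) Nzx Hxc HxC'.
      apply: (st_win HxC3 Hn3); apply: Hw; rewrite ?inE ?eqxx ?orbT //.
      by apply/subsetP => w Hw'; rewrite !inE Hw' !orbT.
-
  have Hnbr w : e r w -> w \in S.
    case/(Hnb r w Hr) => [//|[]|[y [HyX Hyr _ _]]]; first by rewrite eqxx.
    by move: Hno => /existsP; case; exists y; rewrite HyX Hyr.
  have [HrD HrC] := HX r Hr.
  case: (boolP (r \in S)) => HrS.
    apply: win_claimed; apply/existsP; exists r; rewrite HrD /=.
    by apply/subsetP => w; rewrite inE => /orP[/eqP->//|/Hnbr].
  have HrC' : r \notin C by apply: contra HrS.
  apply: (st_win HrC' Hn); apply/existsP; exists r; rewrite HrD /=.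
  apply/subsetP => w; rewrite inE => /orP[/eqP->|/Hnbr Hw1]; by rewrite !inE ?eqxx ?Hw1 ?orbT.
Qed.

Definition pairing (M : {set V}) (mate : V -> V) :=
  forall u, u \in M -> [/\ mate u \in M, mate (mate u) = u, mate u != u & e u (mate u)].

Section Dom.
Variables (M : {set V}) (mate : V -> V).
Hypothesis HM : pairing M mate.
Hypothesis Hcov : forall v, v \notin D -> v \in M.

Definition JJ (S : {set V}) := forall u, u \in M -> u \in S -> mate u \notin S.
Definition KK (S C : {set V}) := forall u, u \in M -> u \in S -> mate u \in C.

Lemma notclaimed S : JJ S -> ~~ claimed S.
Proof.
move=> HJ; apply/existsP => -[v /andP[Hv /subsetP Hs]].
have HvM := Hcov Hv; have [_ _ _ He] := HM HvM.
have HvS : v \in S by apply: Hs; rewrite inE eqxx.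
by move: (HJ v HvM HvS); rewrite Hs // inE He orbT.
Qed.

Lemma dom_main n : forall S C, JJ S -> KK S C -> ~~ mbd_from e D n S C true.
Proof.
elim/ltn_ind: n => n IH S C HJ HK.
case: n IH => [|n] IH /=; first exact: notclaimed.
case: ifP => Hex; last exact: notclaimed.
apply/existsP => -[x /andP[HxC H]].
have HJ' : JJ (x |: S).
  move=> u HuM; rewrite !inE negb_or => /orP[/eqP Eux|HuS]; first subst u.
    have [Hm Hmm Hne _] := HM HuM.
    rewrite Hne /=; apply/negP => Hms.
    by move: (HK _ Hm Hms); rewrite Hmm => HxC'; move: HxC; rewrite HxC'.
  have HmC := HK u HuM HuS; rewrite (HJ u HuM HuS) andbT.
  by apply/eqP => Hmx; move: HxC; rewrite -Hmx HmC.
case: n IH H => [|n] IH H; first by move: H => /=; apply/negP; exact: notclaimed.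
move: H => /=; case: ifP => Hex2; last by apply/negP; exact: notclaimed.
move/forallP => H.
have [y Hy Hyc] : exists2 y, y \notin x |: C & ((x \in M) -> mate x \in y |: (x |: C)).
  case: (boolP ((x \in M) && (mate x \notin x |: C))) => [/andP[HxM Hm]|Hno].
    by exists (mate x) => // _; rewrite setU11.
  case/existsP: Hex2 => y Hy; exists y => // HxM.
  by move: Hno; rewrite HxM /= negbK => Hm; rewrite inE Hm orbT.
have := H y; rewrite Hy /= => H'.
apply/negP: H'; apply: IH => //.
move=> u HuM /setU1P[Eux|HuS]; first by subst u; exact: Hyc.
by rewrite !inE (HK u HuM HuS) !orbT.
Qed.

Lemma dominator_pairing : dominator_wins e D.
Proof. by apply: dom_main => u _; rewrite inE. Qed.
End Dom.
End Game.

End G1.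

Module G2.
Import G1.

Section Graph.
Variables (V : finType) (e : rel V).
Hypotheses (Hirr : irreflexive e) (Hsym : symmetric e) (Hacy : acyclic e).

Definition goodb (A : {set V}) (s : seq V) :=
  if s is x :: t then [&& uniq s, all (fun y => y \in A) s & path e x t] else false.

Lemma lowdeg (A : {set V}) a : a \in A ->
  exists2 u, u \in A & exists y, forall w, w \in A -> e u w -> w = y.
Proof.
move=> Ha.
pose P n := [exists t : n.-tuple V, goodb A t].
have exP : exists n, P n.
  exists 1; apply/existsP; exists [tuple a] => /=; by rewrite Ha.
have ubP : forall n, P n -> n <= #|V|.
  move=> n /existsP[t]; case: t => [[|x s] Hs] // H.
  have Hu : uniq (x :: s) by case/and3P: H.
  by rewrite -(eqP Hs) -(card_uniqP Hu); exact: max_card.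
case: (ex_maxnP exP ubP) => m /existsP[t Ht] Hmax.
case: t Ht => [[|u rest] Hsz] //= /and3P[Hu /andP[HuA Hall] Hp].
exists u => //; exists (head u rest) => w HwA Huw.
case: (boolP (w \in u :: rest)) => Hw; last first.
  have : P m.+1.
    have Hsz' : size [:: w, u & rest] == m.+1 by rewrite /= -(eqP Hsz).
    apply/existsP; exists (Tuple Hsz') => /=.
    by rewrite Hw Hu HwA HuA Hall Hsym Huw Hp.
  by move/Hmax; rewrite ltnn.
have Hwu : w != u by apply/eqP => Ewu; move: Huw; rewrite Ewu Hirr.
move: Hw; rewrite inE (negbTE Hwu) /= => Hwr.
have Hi : index w rest < size rest by rewrite index_mem.
have Hnth : nth u rest (index w rest) = w by rewrite nth_index.
case Ei: (index w rest) Hi Hnth => [|i] Hi Hnth; first by rewrite -nth0.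
exfalso.
have Hsz2 : size (take i.+2 rest) = i.+2.
  by rewrite size_take; case: ifP => // /negbT; rewrite -leqNgt => H; apply/eqP; rewrite eqn_leq H Hi.
have Hl : last u (take i.+2 rest) = w.
  by rewrite (last_nth u) Hsz2 /= nth_take.
have := Hacy (s := u :: take i.+2 rest).
rewrite /= Hsz2 => /(_ isT).
case/andP: Hu => Hur Hu.
rewrite (take_uniq _ Hu) andbT.
have -> : u \notin take i.+2 rest.
  by apply: contra Hur; apply: mem_take.
move=> /(_ isT); rewrite rcons_path take_path // Hl Hsym Huw.
done.
Qed.

Definition relB (B : {set V}) : rel V := fun x y => [&& e x y, x \in B & y \in B].

Lemma path_relB (B : {set V}) x s : path (relB B) x s -> all (fun y => y \in B) s.
Proof.
elim: s x => [|y s IH] x //= /andP[/and3P[_ _ HyB] Hp].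
by rewrite HyB (IH y).
Qed.

Lemma cyc (B : {set V}) p u w : p \notin B -> u != w -> e p u -> e p w ->
  connect (relB B) u w -> False.
Proof.
move=> HpB Huw Hpu Hpw /connectP[q Hq].
case: (shortenP Hq) => q' Hq' Hu' _ Hl.
case: q' Hq' Hu' Hl => [|y q'] Hq' Hu' Hl; first by move: Huw; rewrite Hl eqxx.
have Hall := path_relB Hq'.
have HuB : u \in B by case/andP: Hq' => /and3P[].
have Hpin : p \notin u :: y :: q'.
  apply/negP => Hin; have : p \in B; last by rewrite (negbTE HpB).
  move: Hin; rewrite inE => /orP[/eqP->//|Hin].
  by move/allP: Hall => /(_ p Hin).
have Hu2 : uniq [:: p, u, y & q'] by rewrite cons_uniq Hpin Hu'.
have := @Hacy [:: p, u, y & q'] isT Hu2; apply/negP; apply/negPn.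
rewrite /cycle /= Hpu rcons_path; simpl in Hl; rewrite -Hl (Hsym w p) Hpw andbT.
case/andP: Hq' => /and3P[Huy _ _] Hq'; rewrite Huy /=.
by apply: sub_path Hq' => a b /and3P[].
Qed.

Definition sdata (A D Xs : {set V}) r (par con : V -> V) (rk : V -> nat) :=
 [/\ r \in Xs,
  (forall x, x \in Xs -> x \in A /\ x \notin D),
  (forall x, x \in Xs -> x != r -> [/\ par x \in Xs, rk (par x) < rk x, con x \in A, e x (con x) & e (con x) (par x)]),
  (forall x y, x \in Xs -> y \in Xs -> x != r -> y != r -> con x = con y -> x = y) /\ (forall x, x \in Xs -> x != r -> con x \notin Xs) &
  (forall x w, x \in Xs -> w \in A -> e x w -> (x != r /\ w = con x) \/ (exists y, [/\ y \in Xs, y != r, par y = x & w = con y]))].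

Definition sbody (Xs : {set V}) r (con : V -> V) := Xs :|: [set con y | y in Xs :\ r].

Lemma sdata_conn (A D Xs : {set V}) r par con rk : sdata A D Xs r par con rk ->
  forall x, x \in Xs -> connect (relB (sbody Xs r con)) x r.
Proof.
case=> Hr HX Hpar _ _.
suff H : forall k x, rk x < k -> x \in Xs -> connect (relB (sbody Xs r con)) x r.
  by move=> x; apply: (H (rk x).+1).
elim=> [|k IH] x // Hk HxX.
case: (eqVneq x r) => [->|Hxr]; first exact: connect0.
have [Hp Hrk _ He1 He2] := Hpar x HxX Hxr.
have Hc : con x \in sbody Xs r con by rewrite !inE imset_f ?orbT // !inE Hxr.
have Hin z : z \in Xs -> z \in sbody Xs r con by rewrite !inE => ->.
have E1 : relB (sbody Xs r con) x (con x) by rewrite /relB He1 Hc !Hin.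
have E2 : relB (sbody Xs r con) (con x) (par x) by rewrite /relB He2 Hc !Hin.
apply: (@connect_trans _ _ (con x)); first exact: connect1 E1.
apply: (@connect_trans _ _ (par x)); first exact: connect1 E2.
by apply: IH => //; apply: leq_trans Hrk _.
Qed.

Definition match_in (A D M : {set V}) mate :=
  [/\ pairing e M mate, M \subset A & forall v, v \in A -> v \notin D -> v \in M].

Lemma pairing_add (M : {set V}) mate u p : pairing e M mate -> u \notin M -> p \notin M -> u != p -> e u p ->
 pairing e (u |: (p |: M)) (fun z => if z == u then p else if z == p then u else mate z).
Proof.
move=> HM Hu Hp Hup Hep z; rewrite !inE => /or3P[/eqP->|/eqP->|Hz].
- by rewrite ?eqxx (eq_sym p u) ?(negbTE Hup) ?eqxx /= ?orbT Hep.
- by rewrite ?eqxx (eq_sym p u) ?(negbTE Hup) ?eqxx /= ?orbT Hsym Hep.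
- have Hzu : z != u by apply: contraNneq Hu => <-.
  have Hzp : z != p by apply: contraNneq Hp => <-.
  have [Hm Hmm Hne He] := HM z Hz.
  have Hmu : mate z != u by apply: contraNneq Hu => <-.
  have Hmp : mate z != p by apply: contraNneq Hp => <-.
  by rewrite (negbTE Hzu) (negbTE Hzp) (negbTE Hmu) (negbTE Hmp) Hmm Hm !orbT.
Qed.

Lemma sdata_lift (A' D' A D Xs : {set V}) r par con rk : sdata A' D' Xs r par con rk ->
  A' \subset A -> D \subset D' ->
  (forall x w, x \in Xs -> w \in A -> e x w -> w \in A') -> sdata A D Xs r par con rk.
Proof.
move=> [Hr HX Hpar Hinj Hnb] /subsetP HA /subsetP HD Hw; split=> //.
- move=> x Hx; have [H1 H2] := HX x Hx; split; first exact: HA.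
  by apply: contra H2; apply: HD.
- move=> x Hx Hxr; have [? ? ? ? ?] := Hpar x Hx Hxr; split=> //; exact: HA.
- move=> x w Hx HwA Hxw; exact: Hnb (Hw x w Hx HwA Hxw) Hxw.
Qed.

Lemma match_lift (A' D' A D M : {set V}) mate : match_in A' D' M mate -> A' \subset A ->
  (forall v, v \in A -> v \notin D -> v \in A' /\ v \notin D') -> match_in A D M mate.
Proof.
move=> [HM HMA Hc] HA H; split=> //; first exact: subset_trans HA.
by move=> v Hv HvD; have [? ?] := H v Hv HvD; apply: Hc.
Qed.

Lemma relB_sym B : symmetric (relB B).
Proof. by move=> a b; rewrite /relB Hsym; case: (a \in B); case: (b \in B); rewrite ?andbF. Qed.

Lemma dich n : forall (A D : {set V}), #|A| <= n ->
  (exists M mate, match_in A D M mate) \/ (exists Xs r par con rk, sdata A D Xs r par con rk).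
Proof.
have Hempty (A D : {set V}) : A = set0 -> exists M mate, match_in A D M mate.
  move=> ->; exists set0, id; split; [by move=> z; rewrite inE|exact: sub0set|by move=> v; rewrite inE].
elim: n => [|n IH] A D HA.
  by left; apply: Hempty; apply: cards0_eq; move: HA; rewrite leqn0 => /eqP.
case: (set_0Vmem A) => [A0|[a Ha]]; first by left; apply: Hempty.
have [u HuA [y Hy]] := lowdeg Ha.
case: (boolP [exists w, (w \in A) && e u w]) => [/existsP[w0 /andP[Hw0A Huw0]]|Hiso].
- have Ew0 := Hy w0 Hw0A Huw0; subst w0.
  have Huy : u != y by apply/eqP => E; move: Huw0; rewrite E Hirr.
  case: (boolP (u \in D)) => HuD; last first.
  + set A' := A :\ u :\ y.
    have HA' : #|A'| <= n.
      apply: leq_trans (subset_leq_card (subsetDl _ _)) _.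
      by move: HA; rewrite (cardsD1 u A) HuA.
    have HA'A : A' \subset A by apply: subset_trans (subsetDl _ _) (subsetDl _ _).
    have HuA' : u \notin A' by rewrite !inE eqxx andbF.
    have HyA' : y \notin A' by rewrite !inE eqxx.
    case: (IH A' D HA') => [[M [mate [HM HMA Hc]]]|[Xs [r [par [con [rk Hs]]]]]].
    * have HuM : u \notin M by apply: contra HuA'; apply: (subsetP HMA).
      have HyM : y \notin M by apply: contra HyA'; apply: (subsetP HMA).
      left; exists (u |: (y |: M)), (fun z => if z == u then y else if z == y then u else mate z).
      split; first exact: pairing_add.
      -- apply/subsetP => z; rewrite !inE => /or3P[/eqP->//|/eqP->//|/(subsetP HMA)].
         by rewrite !inE => /and3P[].
      -- move=> v Hv HvD; rewrite !inE; case: (eqVneq v u) => //= Hvu.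
         case: (eqVneq v y) => //= Hvy; apply: Hc => //.
         by rewrite !inE Hvu Hvy Hv.
    * right.
      have Hs0 := Hs; case: Hs0 => Hr HX Hpar [Hinj Hcon] Hnb.
      have HXA' z : z \in Xs -> z \in A' by move/HX => [].
      have HuX : u \notin Xs by apply: contra HuA'; apply: HXA'.
      have HyX : y \notin Xs by apply: contra HyA'; apply: HXA'.
      have HzA z : z \in A' -> z \in A by apply: (subsetP HA'A).
      have Hnu z : z \in Xs -> e z u -> False.
        move=> HzX Hzu; have := Hy z (HzA _ (HXA' _ HzX)); rewrite Hsym Hzu => /(_ isT) Ezy.
        by move: HyX; rewrite -Ezy HzX.
      case: (boolP [exists x, (x \in Xs) && e x y]) => [/existsP[x /andP[HxX Hxy]]|Hno]; last first.
      -- exists Xs, r, par, con, rk; apply: (sdata_lift Hs HA'A (subxx _)).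
         move=> z w HzX HwA Hzw; rewrite !inE HwA andbT.
         case: (eqVneq w y) => [Ewy|Hwy]; first by subst w; move/existsP: Hno; case; exists z; rewrite HzX.
         case: (eqVneq w u) => [Ewu|Hwu] //=; subst w.
         by exfalso; apply: (Hnu z HzX).
      -- have Hur : u != r by apply: contraNneq HuX => ->.
         have HconA' z : z \in Xs -> z != r -> con z \in A' by move=> HzX Hzr; case: (Hpar z HzX Hzr).
         exists (u |: Xs), r, (fun z => if z == u then x else par z), (fun z => if z == u then y else con z),
           (fun z => if z == u then (rk x).+1 else rk z); split.
         ++ by rewrite !inE Hr orbT.
         ++ move=> z; rewrite !inE => /orP[/eqP->|HzX]; first by split.
            by have [H1 H2] := HX z HzX; split=> //; apply: HzA.
         ++ move=> z; rewrite !inE => /orP[/eqP->|HzX] Hzr.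
            ** rewrite eqxx; have Hxu : x != u by apply: contraNneq HuX => <-.
               by rewrite (negbTE Hxu) HxX orbT ltnSn Huw0 Hsym Hxy; split.
            ** have Hzu : z != u by apply: contraNneq HuX => <-.
               have [Hp Hrk Hc He1 He2] := Hpar z HzX Hzr.
               have Hpu : par z != u by apply: contraNneq HuX => <-.
               by rewrite (negbTE Hzu) (negbTE Hpu) Hp orbT Hrk (HzA _ Hc) He1 He2.
         ++ split.
            ** move=> z1 z2; rewrite !inE => /orP[/eqP->|Hz1] /orP[/eqP->|Hz2] Hz1r Hz2r //.
               --- have Hz2u : z2 != u by apply: contraNneq HuX => <-.
                   rewrite eqxx (negbTE Hz2u) => Eyc; move: HyA'; rewrite Eyc HconA' //.
               --- have Hz1u : z1 != u by apply: contraNneq HuX => <-.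
                   rewrite eqxx (negbTE Hz1u) => Eyc; move: HyA'; rewrite -Eyc HconA' //.
               --- have Hz1u : z1 != u by apply: contraNneq HuX => <-.
                   have Hz2u : z2 != u by apply: contraNneq HuX => <-.
                   rewrite (negbTE Hz1u) (negbTE Hz2u); exact: Hinj.
            ** move=> z; rewrite !inE => /orP[/eqP->|HzX] Hzr.
               --- by rewrite eqxx eq_sym (negbTE Huy) HyX.
               --- have Hzu : z != u by apply: contraNneq HuX => <-.
                   rewrite (negbTE Hzu) negb_or (Hcon z HzX Hzr) andbT.
                   by apply: contraNneq HuA' => <-; apply: HconA'.
         ++ move=> z w; rewrite !inE => /orP[/eqP->|HzX] HwA Hzw.
            ** by left; rewrite eqxx Hur (Hy w HwA Hzw).
            ** have Hzu : z != u by apply: contraNneq HuX => <-.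
               rewrite (negbTE Hzu).
               case: (eqVneq w u) => [Ewu|Hwu]; first by subst w; exfalso; apply: (Hnu z HzX).
               case: (eqVneq w y) => [Ewy|Hwy].
               --- subst w; case: (eqVneq z x) => [Ezx|Hzx].
                   +++ subst z; right; exists u; rewrite !inE eqxx Hur; split=> //.
                   +++ exfalso; apply: (@cyc (sbody Xs r con) y x z) => //.
                       *** rewrite !inE negb_or HyX /=; apply/imsetP => -[z' Hz' Eyz'].
                           move: Hz'; rewrite !inE => /andP[Hz'r Hz'X].
                           by move: HyA'; rewrite Eyz' HconA'.
                       *** by rewrite eq_sym.
                       *** by rewrite Hsym.
                       *** by rewrite Hsym.
                       *** apply: (@connect_trans _ _ r); first exact: (sdata_conn Hs).
                           by rewrite (sym_connect_sym (@relB_sym _)); exact: (sdata_conn Hs).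
               --- have HwA' : w \in A' by rewrite !inE Hwu Hwy HwA.
                   case: (Hnb z w HzX HwA' Hzw) => [[Hzr ->]|[y' [Hy'X Hy'r Hpy' ->]]].
                   +++ by left.
                   +++ have Hy'u : y' != u by apply: contraNneq HuX => <-.
                       right; exists y'; rewrite !inE Hy'X orbT (negbTE Hy'u); split=> //.
  + have HA' : #|A :\ u| <= n by move: HA; rewrite (cardsD1 u A) HuA.
    have HuA' : u \notin A :\ u by rewrite !inE eqxx.
    have HyA' : y \in A :\ u by rewrite !inE eq_sym Huy Hw0A.
    case: (IH (A :\ u) (y |: D) HA') => [[M [mate [HM HMA Hc]]]|[Xs [r [par [con [rk Hs]]]]]].
    * have HuM : u \notin M by apply: contra HuA'; apply: (subsetP HMA).
      have HMA2 : M \subset A by apply: subset_trans HMA (subsetDl _ _).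
      case: (boolP (y \in M)) => HyM.
      -- left; exists M, mate; split=> // v Hv HvD.
         case: (eqVneq v y) => [->//|Hvy]; apply: Hc; first by rewrite !inE Hv andbT; apply: contraNneq HvD => ->.
         by rewrite !inE negb_or Hvy.
      -- left; exists (u |: (y |: M)), (fun z => if z == u then y else if z == y then u else mate z).
         split; first exact: pairing_add.
         ++ apply/subsetP => z; rewrite !inE => /or3P[/eqP->//|/eqP->//|/(subsetP HMA2)//].
         ++ move=> v Hv HvD; rewrite !inE; case: (eqVneq v u) => //= Hvu.
            case: (eqVneq v y) => //= Hvy; apply: Hc; first by rewrite !inE Hvu Hv.
            by rewrite !inE negb_or Hvy.
    * right; exists Xs, r, par, con, rk; apply: (sdata_lift Hs (subsetDl _ _) (subsetUr _ _)).
      move=> z w HzX HwA Hzw; rewrite !inE HwA andbT; apply/eqP => Ewu; subst w.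
      have Hzy := Hy z; rewrite Hsym Hzw in Hzy.
      case: Hs => _ HX _ _ _; have [HzA HzD] := HX z HzX.
      move: HzA; rewrite !inE => /andP[_ HzA]; move: (Hzy HzA isT) HzD => ->.
      by rewrite !inE eqxx.
- have Hiso' w : w \in A -> ~~ e u w.
    by move=> HwA; apply/negP => Huw; move/existsP: Hiso; apply; exists w; rewrite HwA.
  case: (boolP (u \in D)) => HuD.
  + have HA' : #|A :\ u| <= n by move: HA; rewrite (cardsD1 u A) HuA.
    case: (IH (A :\ u) D HA') => [[M [mate Hm]]|[Xs [r [par [con [rk Hs]]]]]].
    * left; exists M, mate; apply: match_lift Hm _ _; first exact: subsetDl.
      move=> v Hv HvD; split=> //; rewrite !inE Hv andbT.
      by apply: contraNneq HvD => ->.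
    * right; exists Xs, r, par, con, rk.
      have HXs : forall x, x \in Xs -> x \in A :\ u by case: Hs => _ HX _ _ _ x /HX[].
      apply: (sdata_lift Hs) => //; first exact: subsetDl.
      move=> x w Hx HwA Hxw; rewrite !inE HwA andbT; apply/eqP => Ewu; subst w.
      move: (HXs x Hx); rewrite !inE => /andP[_ HxA].
      by move: (Hiso' x HxA); rewrite Hsym Hxw.
  + right; exists [set u], u, id, id, (fun _ => 0); split.
    * by rewrite inE.
    * by move=> x; rewrite inE => /eqP->.
    * by move=> x; rewrite inE => /eqP->; rewrite eqxx.
    * split; first by move=> x z; rewrite inE => /eqP-> _; rewrite eqxx.
      by move=> x; rewrite inE => /eqP->; rewrite eqxx.
    * by move=> x w; rewrite inE => /eqP-> HwA Huw; move: (Hiso' w HwA); rewrite Huw.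
Qed.
End Graph.

End G2.

Module G3.
Import G1 G2.

Section Assemble.
Variables (V : finType) (e : rel V).
Hypotheses (Hirr : irreflexive e) (Hsym : symmetric e).

Lemma sdata_staller (D Xs : {set V}) r par con rk :
  sdata e setT D Xs r par con rk -> staller_wins e D.
Proof.
case=> Hr HX Hpar [Hinj Hcon] Hnb.
rewrite /staller_wins; apply: (@staller_main _ _ _ #|Xs| Xs r par con rk) => //.
- split=> //.
  + by move=> x /HX[_ ?]; split=> //; rewrite inE.
  + by move=> x Hx Hxr; have [? ? _ _ _] := Hpar x Hx Hxr; split=> //; rewrite inE.
  + move=> x w Hx Hxw; case: (Hnb x w Hx (in_setT w) Hxw) => [H|H]; [exact: Or32|exact: Or33].
- by rewrite setC0 cardsT.
Qed.

Lemma sdata_dom (D D' Xs : {set V}) r par con rk :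
  sdata e setT D Xs r par con rk -> (forall v, v \notin D' -> v \in Xs /\ v != r) ->
  dominator_wins e D'.
Proof.
case=> Hr HX Hpar [Hinj Hcon] Hnb Hcov.
pose M := (Xs :\ r) :|: [set con y | y in Xs :\ r].
pose mate z := if z \in Xs then con z else odflt z [pick x in Xs :\ r | con x == z].
have Hmc y : y \in Xs :\ r -> mate (con y) = y.
  move=> Hy; move: (Hy); rewrite !inE => /andP[Hyr HyX].
  rewrite /mate (negbTE (Hcon y HyX Hyr)).
  case: pickP => [x /andP[Hx /eqP Hxy]|Hn] /=; last by move: (Hn y); rewrite Hy eqxx.
  by move: Hx; rewrite !inE => /andP[Hxr HxX]; apply: Hinj.
apply: (@dominator_pairing _ _ _ M mate).
- move=> z; rewrite inE => /orP[Hz|/imsetP[y Hy ->]].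
  + move: (Hz); rewrite !inE => /andP[Hzr HzX].
    have Hm : mate z = con z by rewrite /mate HzX.
    have [_ _ _ He _] := Hpar z HzX Hzr.
    rewrite Hm Hmc // He imset_f ?orbT //; split=> //.
    by apply: contraNneq (Hcon z HzX Hzr) => ->.
  + rewrite Hmc //; move: (Hy); rewrite !inE => /andP[Hyr HyX].
    have [_ _ _ He _] := Hpar y HyX Hyr.
    split.
    * by rewrite Hyr HyX.
    * by rewrite /mate HyX.
    * by apply: contraNneq (Hcon y HyX Hyr) => <-.
    * by rewrite Hsym.
- by move=> v /Hcov[HvX Hvr]; rewrite !inE Hvr HvX.
Qed.
End Assemble.

End G3.

Module G4.
Import G1 G2.

Section Build.
Variables (V : finType) (e : rel V).
Hypotheses (Hirr : irreflexive e) (Hsym : symmetric e).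
Variables (D Xs : {set V}) (r : V) (par con : V -> V) (rk : V -> nat).
Hypothesis Hs : sdata e setT D Xs r par con rk.

Let Hr : r \in Xs. Proof. by case: Hs. Qed.
Let Hpar : forall x, x \in Xs -> x != r -> [/\ par x \in Xs, rk (par x) < rk x, con x \in setT, e x (con x) & e (con x) (par x)].
Proof. by case: Hs. Qed.
Let Hinj : forall x y, x \in Xs -> y \in Xs -> x != r -> y != r -> con x = con y -> x = y.
Proof. by case: Hs => _ _ _ []. Qed.
Let Hcon : forall x, x \in Xs -> x != r -> con x \notin Xs.
Proof. by case: Hs => _ _ _ []. Qed.
Let Hnb : forall x w, x \in Xs -> e x w -> (x != r /\ w = con x) \/ (exists y, [/\ y \in Xs, y != r, par y = x & w = con y]).
Proof. by case: Hs => _ _ _ _ H x w Hx; apply: H. Qed.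

Definition W := {x : V | x \in Xs}.
Definition r0 : W := exist _ r Hr.
Definition parW (a : W) : W := insubd a (par (val a)).

Lemma val_parW (a : W) : val a != r -> val (parW a) = par (val a).
Proof. by move=> H; rewrite /parW insubdK //; case: (Hpar (valP a) H). Qed.

Lemma rk_parW (a : W) : val a != r -> rk (val (parW a)) < rk (val a).
Proof. by move=> H; rewrite val_parW //; case: (Hpar (valP a) H). Qed.

Lemma parW_neq (a : W) : val a != r -> parW a != a.
Proof. by move=> H; apply/eqP => E; have := rk_parW H; rewrite E ltnn. Qed.

Definition fW : rel W := fun a b => ((val a != r) && (parW a == b)) || ((val b != r) && (parW b == a)).

Definition phiW (z : W + {set W}) : V :=
  match z with
  | inl a => val a
  | inr B => match [pick c | (c \in B) && (val c != r) && (parW c \in B)] with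
             | Some c => con (val c) | None => r end
  end.

Lemma child_spec (c : W) : val c != r ->
  phiW (inr [set c; parW c]) = con (val c).
Proof.
move=> Hc /=; case: pickP => [c' /andP[/andP[Hc' Hc'r] Hpc']|Hn]; last first.
  by move: (Hn c); rewrite !inE !eqxx Hc /= orbT.
move: Hc'; rewrite !inE => /orP[/eqP->//|/eqP Ec'].
move: Hpc'; rewrite !inE => /orP[/eqP E1|/eqP E2].
- by have := rk_parW Hc'r; rewrite E1 Ec' => H; have := leq_trans H (ltnW (rk_parW Hc)); rewrite ltnn.
- by move: (parW_neq Hc'r); rewrite E2 Ec' eqxx.
Qed.

Lemma valid_spec (B : {set W}) : sd_valid fW (inr B) ->
  exists c : W, [/\ val c != r, B = [set c; parW c] & phiW (inr B) = con (val c)].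
Proof.
move=> /existsP[a /existsP[b /andP[Hab /eqP ->]]].
case/orP: Hab => /andP[Hr' /eqP E].
- by exists a; rewrite -E child_spec.
- by exists b; rewrite setUC -E child_spec.
Qed.

Lemma valid_child (c : W) : val c != r -> sd_valid fW (inr [set c; parW c]).
Proof.
by move=> H; apply/existsP; exists c; apply/existsP; exists (parW c); rewrite eqxx andbT /fW H eqxx.
Qed.

Lemma W_conn (a : W) : connect fW a r0.
Proof.
suff H : forall k (a : W), rk (val a) < k -> connect fW a r0 by apply: (H (rk (val a)).+1).
elim=> [|k IH] {}a // Hk.
case: (eqVneq (val a) r) => [E|Ha].
  by have -> : a = r0 by apply: val_inj.
apply: (@connect_trans _ _ (parW a)).
  by apply: connect1; rewrite /fW Ha eqxx.
by apply: IH; apply: leq_trans (rk_parW Ha) _.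
Qed.

Lemma fW_sym : symmetric fW.
Proof. by move=> a b; rewrite /fW orbC. Qed.

Lemma W_tree : is_tree fW.
Proof.
split.
- split; last exact: fW_sym.
  by move=> a; rewrite /fW orbb; apply/negP => /andP[H /eqP E]; move: (parW_neq H); rewrite E eqxx.
- by apply/card_gt0P; exists r0.
- move=> a b; apply: (@connect_trans _ _ r0); first exact: W_conn.
  by rewrite (sym_connect_sym fW_sym); exact: W_conn.
- move=> s Hsz Hu; apply/negP => Hc.
  have [m Hm] : exists m, m \in s by case: s Hsz {Hu Hc} => [|m s] //; exists m; rewrite inE eqxx.
  pose F := fun a : W => rk (val a).
  case: (@arg_maxnP _ m (fun a => a \in s) F Hm) => x Hx Hmax.
  case: (rot_to Hx) => i s' Hrot.
  have Hu' : uniq (x :: s') by rewrite -Hrot rot_uniq.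
  have Hc' : cycle fW (x :: s') by rewrite -Hrot rot_cycle.
  have Hsz' : 3 <= size (x :: s') by rewrite -Hrot size_rot.
  have Hin z : z \in x :: s' -> F z <= F x by rewrite -Hrot mem_rot => /Hmax.
  clear Hrot; case: s' Hu' Hc' Hsz' Hin => [|a [|b t]] // Hu' Hc' _ Hin.
  have Hfx z : z \in x :: a :: b :: t -> fW x z -> parW x = z.
    move=> Hz /orP[/andP[_ /eqP]//|/andP[Hzr /eqP Epz]].
    by have := Hin z Hz; rewrite /F -Epz leqNgt rk_parW.
  move: Hc'; rewrite /cycle rcons_path => /andP[/andP[Hxa _] Hlx].
  have Ha : parW x = a by apply: Hfx => //; rewrite !inE eqxx orbT.
  have Hlin : last a (b :: t) \in x :: a :: b :: t by rewrite inE mem_last orbT.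
  have Hl : parW x = last a (b :: t) by apply: Hfx => //; rewrite fW_sym.
  have Eal : a = last b t by rewrite -Ha Hl.
  move: Hu' => /and3P[_ Hna _].
  by move: Hna; rewrite {1}Eal mem_last.
Qed.

Lemma phi_inj z1 z2 : sd_valid fW z1 -> sd_valid fW z2 -> phiW z1 = phiW z2 -> z1 = z2.
Proof.
have Hx (a : W) (B : {set W}) : sd_valid fW (inr B) -> phiW (inl a) = phiW (inr B) -> False.
  move=> /valid_spec[c [Hc _ ->]] /= E.
  by move: (Hcon (valP c) Hc); rewrite -E (valP a).
case: z1 => [a|B1]; case: z2 => [b|B2] H1 H2 E.
- by congr inl; apply: val_inj.
- by case: (Hx a B2 H2 E).
- by case: (Hx b B1 H1 (esym E)).
- move: E; have [c1 [Hc1 -> ->]] := valid_spec H1; have [c2 [Hc2 -> ->]] := valid_spec H2.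
  by move=> /(Hinj (valP c1) (valP c2) Hc1 Hc2) /val_inj ->.
Qed.

Lemma phi_edge1 (a : W) (B : {set W}) : sd_valid fW (inr B) -> a \in B -> e (phiW (inl a)) (phiW (inr B)).
Proof.
move=> /valid_spec[c [Hc -> ->]] /=; rewrite !inE => /orP[/eqP->|/eqP->].
- by case: (Hpar (valP c) Hc).
- by rewrite val_parW // Hsym; case: (Hpar (valP c) Hc).
Qed.

Lemma phi_edge z1 z2 : sd_valid fW z1 -> sd_valid fW z2 -> sd_edge fW z1 z2 -> e (phiW z1) (phiW z2).
Proof.
case: z1 => [a|B1]; case: z2 => [b|B2] //= _ _ /andP[Hv Hin].
- exact: phi_edge1.
- by rewrite Hsym; apply: phi_edge1.
Qed.

Lemma X_of_W : X_of phiW = Xs.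
Proof.
apply/setP => x; apply/imsetP/idP => [[a _ ->]|Hx]; first exact: (valP a).
by exists (exist _ x Hx).
Qed.

Lemma nbr_F (a : W) w : e (val a) w -> F_edge fW phiW (val a) w.
Proof.
move=> H; apply/existsP; exists (inl a).
case: (Hnb (valP a) H) => [[Har ->]|[y [Hy Hyr Hpy ->]]].
- apply/existsP; exists (inr [set a; parW a]).
  have Hv := valid_child Har.
  apply/and5P; split; [done|exact: Hv| |done|apply/eqP; exact: child_spec Har].
  by apply/andP; split; [exact: Hv|rewrite !inE eqxx].
- pose yW : W := exist _ y Hy.
  have Hp : parW yW = a by apply: val_inj; rewrite val_parW.
  apply/existsP; exists (inr [set yW; parW yW]).
  have Hv := valid_child (Hyr : val yW != r).
  apply/and5P; split; [done|exact: Hv| |done|apply/eqP; exact: child_spec].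
  by apply/andP; split; [exact: Hv|rewrite !inE Hp eqxx orbT].
Qed.

Lemma build_sub : [/\ is_tree fW, substructure e fW phiW & X_of phiW = Xs].
Proof.
split; [exact: W_tree| |exact: X_of_W].
split; first by split; [exact: phi_inj|exact: phi_edge].
move=> x /imsetP[a _ ->]; rewrite /deg /F_deg; apply: eq_card => w; rewrite !inE.
apply/idP/idP; first exact: nbr_F.
move=> /existsP[z1 /existsP[z2 /and5P[H1 H2 H3 /eqP E1 /eqP E2]]].
by rewrite -E1 -E2; apply: phi_edge.
Qed.

Lemma build_iso :
  (forall v, v \in Xs \/ exists2 y, y \in Xs & y != r /\ v = con y) ->
  (forall y1 y2, y1 \in Xs -> y2 \in Xs -> y1 != r -> y2 != r -> ~~ e (con y1) (con y2)) ->
  sd_iso e fW phiW.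
Proof.
move=> Hcov Hind; split; first exact: phi_inj.
split.
- move=> v; case: (Hcov v) => [Hv|[y Hy [Hyr ->]]].
    by exists (inl (exist _ v Hv)).
  pose yW : W := exist _ y Hy.
  by exists (inr [set yW; parW yW]); [exact: valid_child|rewrite child_spec].
- have H1 (a : W) B : sd_valid fW (inr B) -> e (phiW (inl a)) (phiW (inr B)) = (a \in B).
    move=> Hv; apply/idP/idP; last exact: phi_edge1.
    move: (Hv) => /valid_spec[c [Hc -> ->]] /= He.
    case: (Hnb (valP a) He) => [[Har E]|[y [Hy Hyr Hpy E]]].
    + have := Hinj (valP a) (valP c) Har Hc (esym E) => /val_inj ->; by rewrite !inE eqxx.
    + have Eyc := Hinj Hy (valP c) Hyr Hc (esym E).
      have -> : a = parW c by apply: val_inj; rewrite val_parW // -Eyc Hpy.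
      by rewrite !inE eqxx orbT.
  case=> [a|B1]; case=> [b|B2] Hv1 Hv2.
  + rewrite /=; apply/negbTE/negP => He; case: (Hnb (valP a) He) => [[Har E]|[y [Hy Hyr _ E]]].
    * by move: (Hcon (valP a) Har); rewrite -E (valP b).
    * by move: (Hcon Hy Hyr); rewrite -E (valP b).
  + rewrite (H1 a B2 Hv2) /=; apply/idP/idP => [H|/andP[_ H]] //; apply/andP; split=> //; exact: Hv2.
  + rewrite Hsym (H1 b B1 Hv1) /=; apply/idP/idP => [H|/andP[_ H]] //; apply/andP; split=> //; exact: Hv1.
  + have [c1 [Hc1 _ ->]] := valid_spec Hv1; have [c2 [Hc2 _ ->]] := valid_spec Hv2.
    by apply/negbTE; apply: Hind => //; apply: valP.
Qed.
End Build.

End G4.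

Module G5.
Import G1 G2.

Section Root.
Variables (W : finType) (f : rel W).
Hypothesis Htree : is_tree f.
Variable v : W.

Let Hirr : irreflexive f. Proof. by case: Htree => [[]]. Qed.
Let Hsym : symmetric f. Proof. by case: Htree => [[]]. Qed.
Let Hconn : is_connected f. Proof. by case: Htree. Qed.
Let Hacy : acyclic f. Proof. by case: Htree. Qed.

Fixpoint R (n : nat) : {set W} :=
  if n is n'.+1 then R n' :|: [set a | [exists b in R n', f a b]] else [set v].

Lemma R_mono n m : n <= m -> R n \subset R m.
Proof.
move/subnK <-; elim: (m - n) => [|k IH]; first exact: subxx.
by rewrite addSn /=; apply: subset_trans IH (subsetUl _ _).
Qed.

Lemma R_path p : forall n x, x \in R n -> path f x p -> last x p \in R (n + size p).
Proof.
elim: p => [|y p IH] n x Hx /=; first by rewrite addn0.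
case/andP => Hxy Hp; rewrite addnS -addSn; apply: IH Hp.
by rewrite /= inE; apply/orP; right; rewrite inE; apply/existsP; exists x; rewrite Hx Hsym.
Qed.

Lemma exR a : exists n, a \in R n.
Proof.
have /connectP[p Hp ->] := Hconn v a.
by exists (0 + size p); apply: R_path => //; rewrite inE.
Qed.

Definition rkW a := ex_minn (exR a).

Lemma rkW_in a : a \in R (rkW a).
Proof. by rewrite /rkW; case: ex_minnP. Qed.

Lemma rkW_min a n : a \in R n -> rkW a <= n.
Proof. by rewrite /rkW; case: ex_minnP => m _ H /H. Qed.

Lemma rkW0 a : (rkW a == 0) = (a == v).
Proof.
apply/idP/idP => [/eqP H|/eqP ->]; last by rewrite -leqn0 rkW_min // inE.
by move: (rkW_in a); rewrite H inE.
Qed.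

Definition parW a := odflt a [pick b | f a b && (rkW b < rkW a)].

Lemma parW_spec a : a != v -> f a (parW a) /\ rkW (parW a) < rkW a.
Proof.
move=> Hav; rewrite /parW; case: pickP => [b /andP[H1 H2]|Hn] //=.
exfalso; have Hr := rkW_in a; case E: (rkW a) Hr => [|m] Hr.
  by move: Hav; rewrite -rkW0 E.
move: Hr; rewrite /= inE => /orP[Hm|].
  by have := rkW_min Hm; rewrite E ltnn.
rewrite inE => /existsP[b /andP[Hb Hab]].
by move: (Hn b); rewrite Hab E ltnS rkW_min.
Qed.

Lemma chain (B : {set W}) : (forall y, y \in B -> y != v -> parW y \in B) ->
  forall x, x \in B -> connect (relB f B) x v.
Proof.
move=> HB.
suff H : forall k x, rkW x < k -> x \in B -> connect (relB f B) x v.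
  by move=> x; apply: (H (rkW x).+1).
elim=> [|k IH] x // Hk HxB.
case: (eqVneq x v) => [->|Hxv]; first exact: connect0.
have [Hf Hr] := parW_spec Hxv.
apply: (@connect_trans _ _ (parW x)).
  by apply: connect1; rewrite /relB Hf HxB HB.
by apply: IH; [apply: leq_trans Hr _|apply: HB].
Qed.

Lemma edge_par a c : f a c -> (a != v /\ parW a = c) \/ (c != v /\ parW c = a).
Proof.
wlog Hac : a c / rkW a <= rkW c.
  move=> H Hf; case: (leqP (rkW a) (rkW c)) => Hr; first exact: H.
  rewrite Hsym in Hf; case: (H c a (ltnW Hr) Hf) => [[]|[]]; by [right|left].
move=> Hf.
have Hcv : c != v.
  apply/eqP => Ecv; move: Hac; rewrite Ecv (eqP (_ : rkW v == 0)) ?rkW0 // leqn0 rkW0 => /eqP Eav.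
  by move: Hf; rewrite Eav Ecv Hirr.
have [Hfc Hrc] := parW_spec Hcv.
case: (eqVneq (parW c) a) => [E|Hne]; first by right.
exfalso.
pose B := [set y | (rkW y < rkW c) || (y == a)].
have Hac' : a != c by apply/eqP => E; move: Hf; rewrite E Hirr.
apply: (@cyc _ f Hsym Hacy B c a (parW c)).
- by rewrite inE ltnn /= eq_sym.
- by rewrite eq_sym.
- by rewrite Hsym.
- done.
- have HB : forall y, y \in B -> y != v -> parW y \in B.
    move=> y; rewrite !inE => /orP[Hy|/eqP->] Hyv; have [_ Hr] := parW_spec Hyv.
    + by rewrite (ltn_trans Hr Hy).
    + by rewrite (leq_trans Hr Hac).
  apply: (@connect_trans _ _ v); first by apply: chain => //; rewrite inE eqxx orbT.
  rewrite (sym_connect_sym (relB_sym Hsym B)); apply: chain => //.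
  by rewrite inE Hrc.
Qed.
End Root.

End G5.

Module G6.
Import G1 G2 G5.

Section FromSub.
Variables (V : finType) (e : rel V) (W : finType) (f : rel W) (phi : W + {set W} -> V).
Hypothesis Htree : is_tree f.
Hypothesis Hsub : substructure e f phi.
Variable v : W.
Variable D : {set V}.
Hypothesis HD : forall x, x \in X_of phi -> x \notin D.

Let Hsym : symmetric f. Proof. by case: Htree => [[]]. Qed.
Let Hinj : forall z1 z2, sd_valid f z1 -> sd_valid f z2 -> phi z1 = phi z2 -> z1 = z2.
Proof. by case: Hsub => [[]]. Qed.
Let Hedge : forall z1 z2, sd_valid f z1 -> sd_valid f z2 -> sd_edge f z1 z2 -> e (phi z1) (phi z2).
Proof. by case: Hsub => [[]]. Qed.
Let Hdeg : forall x, x \in X_of phi -> deg e x = F_deg f phi x.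
Proof. by case: Hsub. Qed.

Definition inv (x : V) : W := odflt v [pick a | phi (inl a) == x].
Lemma invK a : inv (phi (inl a)) = a.
Proof.
rewrite /inv; case: pickP => [b /eqP Hb|Hn] /=; last by move: (Hn a); rewrite eqxx.
by have := @Hinj (inl b) (inl a) isT isT Hb => -[].
Qed.

Let pW := parW Htree v.
Let rW := rkW Htree v.

Definition rS := phi (inl v).
Definition parS x := phi (inl (pW (inv x))).
Definition conS x := phi (inr [set inv x; pW (inv x)]).
Definition rkS x := rW (inv x).

Lemma validP (a : W) : a != v -> sd_valid f (inr [set a; pW a]).
Proof.
move=> H; apply/existsP; exists a; apply/existsP; exists (pW a).
by have [Hf _] := parW_spec Htree H; rewrite Hf eqxx.
Qed.

Lemma sdata_sub : sdata e setT D (X_of phi) rS parS conS rkS.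
Proof.
have HX a : phi (inl a) \in X_of phi by apply: imset_f.
have Hxa x : x \in X_of phi -> exists a, x = phi (inl a) by move/imsetP => [a _ ->]; exists a.
have Hne a : phi (inl a) != rS -> a != v by apply: contraNneq => ->.
split.
- exact: HX.
- by move=> x Hx; rewrite inE HD.
- move=> x /Hxa[a ->] Hxr; have Hav := Hne a Hxr.
  have [Hf Hr] := parW_spec Htree Hav.
  rewrite /parS /conS /rkS !invK HX Hr inE; split=> //.
  + by apply: Hedge => //; [exact: validP|apply/andP; split; [exact: validP|rewrite !inE eqxx]].
  + by apply: Hedge => //; [exact: validP|apply/andP; split; [exact: validP|rewrite !inE eqxx orbT]].
- split.
  + move=> x y /Hxa[a ->] /Hxa[b ->] Hxr Hyr; have Hav := Hne a Hxr; have Hbv := Hne b Hyr.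
    rewrite /conS !invK => E.
    have := Hinj (validP Hav) (validP Hbv) E => -[EB].
    have [_ Hra] := parW_spec Htree Hav; have [_ Hrb] := parW_spec Htree Hbv.
    have : a \in [set b; pW b] by rewrite -EB !inE eqxx.
    rewrite !inE => /orP[/eqP->//|/eqP Eab].
    have : b \in [set a; pW a] by rewrite EB !inE eqxx.
    rewrite !inE => /orP[/eqP->//|/eqP Eba].
    have H1 : rW a < rW b by rewrite {1}Eab; exact: Hrb.
    have H2 : rW b < rW a by rewrite {1}Eba; exact: Hra.
    by move: (ltn_trans H1 H2); rewrite ltnn.
  + move=> x /Hxa[a ->] Hxr; have Hav := Hne a Hxr.
    apply/imsetP => -[b _]; rewrite /conS invK => E.
    by have := @Hinj _ (inl b) (validP Hav) isT E.
- move=> x w /Hxa[a ->] _ Hxw.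
  have Hsub' : [set w | F_edge f phi (phi (inl a)) w] \subset [set w | e (phi (inl a)) w].
    apply/subsetP => w'; rewrite !inE => /existsP[z1 /existsP[z2 /and5P[H1 H2 H3 /eqP E1 /eqP E2]]].
    by rewrite -E1 -E2; apply: Hedge.
  have Hc := Hdeg (HX a); rewrite /deg /F_deg in Hc.
  have /(_ w) := subset_cardP (esym Hc) Hsub'; rewrite !inE Hxw.
  move=> /existsP[z1 /existsP[z2 /and5P[H1 H2 H3 /eqP E1 /eqP E2]]].
  have Ez1 := @Hinj z1 (inl a) H1 isT E1; subst z1.
  case: z2 H2 H3 E2 => [b|B] //= HB /andP[_ HaB] E2.
  have [c [Hac EB]] : exists c, f a c /\ B = [set a; c].
    move: HB => /existsP[b1 /existsP[b2 /andP[Hb /eqP EB]]].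
    move: HaB; rewrite EB !inE => /orP[/eqP->|/eqP->].
    + by exists b2.
    + by exists b1; rewrite setUC Hsym.
  subst B.
  case: (@edge_par _ _ Htree v a c Hac) => [[Hav Hp]|[Hcv Hp]].
  + left; split; last by rewrite -E2 /conS invK -Hp.
    by apply: contraNneq Hav => E; apply/eqP; case: (@Hinj (inl a) (inl v) isT isT E).
  + right; exists (phi (inl c)); split.
    * exact: HX.
    * by apply: contraNneq Hcv => E; apply/eqP; case: (@Hinj (inl c) (inl v) isT isT E).
    * by rewrite /parS invK -Hp.
    * by rewrite -E2 /conS invK -Hp setUC.
Qed.
End FromSub.

End G6.

Module G7.
Import G1 G2 G3 G4 G5 G6.

Section Main.
Variables (V : finType) (e : rel V).
Hypothesis Hte : is_tree e.
Let Hirr : irreflexive e. Proof. by case: Hte => [[]]. Qed.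
Let Hsym : symmetric e. Proof. by case: Hte => [[]]. Qed.
Let Hacy : acyclic e. Proof. by case: Hte. Qed.
Let Hconn : is_connected e. Proof. by case: Hte. Qed.

Lemma sdata_D (A D D' Xs : {set V}) r par con rk : sdata e A D Xs r par con rk ->
  (forall y, y \in Xs -> y \notin D') -> sdata e A D' Xs r par con rk.
Proof.
case=> Hr HX Hpar Hic Hnb HD; split=> // x Hx; have [? _] := HX x Hx; split=> //; exact: HD.
Qed.

Lemma crit_sdata (D : {set V}) : mbd_critical e D ->
  exists Xs r par con rk, sdata e setT D Xs r par con rk /\ D = ~: Xs.
Proof.
case=> Hst Hcrit.
case: (@dich _ _ Hirr Hsym Hacy #|V| setT D (max_card _)) =>
  [[M [mate [HM _ Hc]]]|[Xs [r [par [con [rk Hs]]]]]].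
  by move: (@dominator_pairing _ _ D _ _ HM (fun v => Hc v (in_setT v))); rewrite /dominator_wins Hst.
exists Xs, r, par, con, rk; split=> //.
apply/setP => x; rewrite inE; apply/idP/idP => [HxD|HxX].
  by apply/negP => HxX; case: Hs => _ /(_ x HxX) [_]; rewrite HxD.
apply/negPn/negP => HxD.
have Hs' : sdata e setT (x |: D) Xs r par con rk.
  apply: (sdata_D Hs) => y Hy; rewrite !inE negb_or.
  have [_ HX _ _ _] := Hs; have [_ ->] := HX y Hy; rewrite andbT; apply/negP => /eqP Eyx; move: HxX; by rewrite -Eyx Hy.
by move: (Hcrit x HxD); rewrite /dominator_wins (sdata_staller Hs').
Qed.

Lemma part1_bwd (D : {set V}) (W : finType) (f : rel W) (phi : W + {set W} -> V) :
  is_tree f -> substructure e f phi -> D = ~: X_of phi -> mbd_critical e D.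
Proof.
move=> Ht Hsub HD.
have HD' x : x \in X_of phi -> x \notin D by rewrite HD inE negbK.
split.
- have [v0 _] : exists v0, v0 \in W by case: Ht => _ /card_gt0P.
  exact: (sdata_staller (sdata_sub Ht Hsub v0 HD')).
- move=> u; rewrite HD inE negbK => /imsetP[a _ Eu].
  apply: (sdata_dom Hsym (sdata_sub Ht Hsub a HD')) => w; rewrite !inE negb_or => /andP[Hwu].
  rewrite ?negbK => Hw; split=> //; rewrite /rS -Eu //.
Qed.

Lemma boundary (B : {set V}) x y : connect e x y -> x \in B -> y \notin B ->
  exists u w, [/\ u \in B, w \notin B & e u w].
Proof.
move=> /connectP[p Hp ->]; elim: p x Hp => [|z p IH] x /= Hp HxB Hl.
  by move: Hl; rewrite HxB.
case/andP: Hp => Hxz Hp; case: (boolP (z \in B)) => HzB; first exact: IH Hp HzB Hl.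
by exists x, z.
Qed.

Lemma cover_all (D Xs : {set V}) r par con rk : sdata e setT D Xs r par con rk -> D = ~: Xs ->
  (forall u w, u \in D -> w \in D -> ~~ e u w) ->
  forall v, v \in Xs \/ exists2 y, y \in Xs & y != r /\ v = con y.
Proof.
move=> Hs HD Hind v.
pose B := Xs :|: [set con y | y in Xs :\ r].
case: (boolP (v \in B)) => HvB.
  move: HvB; rewrite inE => /orP[H|/imsetP[y Hy ->]]; first by left.
  by move: Hy; rewrite !inE => /andP[Hyr HyX]; right; exists y.
exfalso.
have Hr : r \in Xs by case: Hs.
have HrB : r \in B by rewrite inE Hr.
have [u [w [HuB HwB Huw]]] := boundary (Hconn r v) HrB HvB.
have HwX : w \notin Xs by apply: contra HwB; rewrite inE => ->.
move: HuB; rewrite inE => /orP[HuX|/imsetP[y Hy Eu]].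
- have [_ _ _ _ Hnb] := Hs.
  case: (Hnb u w HuX (in_setT _) Huw) => [[Hur Ew]|[y [HyX Hyr _ Ew]]]; move: HwB; rewrite inE Ew negb_or => /andP[_].
  + by rewrite imset_f // !inE Hur HuX.
  + by rewrite imset_f // !inE Hyr HyX.
- have [_ _ _ [_ Hcon] _] := Hs.
  move: Hy; rewrite !inE => /andP[Hyr HyX].
  have HuD : u \in D by rewrite HD inE Eu (Hcon y HyX Hyr).
  have HwD : w \in D by rewrite HD inE HwX.
  by move: (Hind u w HuD HwD); rewrite Huw.
Qed.
End Main.


End G7.

Import G1 G2 G3 G5 G6 G4 G7.
Theorem theorem4p6 (V : finType) (e : rel V) (D : {set V}) :
  is_tree e ->
  (mbd_critical e D <->
     exists (W : finType) (f : rel W) (phi : W + {set W} -> V),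
       [/\ is_tree f, substructure e f phi & D = ~: X_of phi])
  /\
  (atomic_mbd_critical e D <->
     exists (W : finType) (f : rel W) (phi : W + {set W} -> V),
       [/\ is_tree f, sd_iso e f phi & D = ~: X_of phi]).
Proof.
move=> Ht.
have Hsym : symmetric e by case: Ht => [[]].
split.
- split.
  + move/(crit_sdata Ht) => [Xs [r [par [con [rk [Hs HD]]]]]].
    have [Htf Hsb HX] := build_sub Hsym Hs.
    by exists (W Xs), (fW r par), (phiW r par con); split=> //; rewrite HX.
  + move=> [W0 [f [phi [Htf Hsb HD]]]]; exact: (@part1_bwd V e Ht D W0 f phi Htf Hsb HD).
- split.
  + move=> [Hcrit Hind _].
    have [Xs [r [par [con [rk [Hs HD]]]]]] := crit_sdata Ht Hcrit.
    have [Htf Hsb HX] := build_sub Hsym Hs.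
    exists (W Xs), (fW r par), (phiW r par con); split=> //; last by rewrite HX.
    apply: (build_iso Hsym Hs); first exact: (cover_all Ht Hs HD).
    move=> y1 y2 Hy1 Hy2 Hr1 Hr2; have [_ _ _ [_ Hcon] _] := Hs.
    by apply: Hind; rewrite HD inE ?Hcon.
  + move=> [W0 [f [phi [Htf [Hinj [Hsurj Hiso]] HD]]]].
    have Hsb : substructure e f phi.
      split; first by split=> // z1 z2 H1 H2 H3; rewrite Hiso.
      move=> x /imsetP[a _ ->]; rewrite /deg /F_deg; apply: eq_card => w; rewrite !inE.
      apply/idP/idP.
      * move=> Hw; have [z Hz Ez] := Hsurj w.
        apply/existsP; exists (inl a); apply/existsP; exists z.
        apply/and5P; split; [done|exact: Hz| |done|by rewrite Ez].
        by rewrite -(Hiso (inl a) z isT Hz) Ez.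
      * move=> /existsP[z1 /existsP[z2 /and5P[H1 H2 H3 /eqP E1 /eqP E2]]].
        by rewrite -E1 -E2 Hiso.
    have HnX u : u \in D -> exists2 B, sd_valid f (inr B) & u = phi (inr B).
      rewrite HD inE => HuX; have [[a|B] Hz Ez] := Hsurj u.
        by move: HuX; rewrite -Ez imset_f.
      by exists B.
    split; first exact: (@part1_bwd V e Ht D W0 f phi Htf Hsb HD).
    * move=> u w /HnX[B1 H1 ->] /HnX[B2 H2 ->]; by rewrite Hiso.
    * move=> u /HnX[B HB ->].
      move: (HB) => /existsP[a /existsP[b /andP[_ /eqP EB]]].
      exists (phi (inl a)); rewrite Hiso //; apply/andP; split; [exact: HB|by rewrite EB !inE eqxx].
Qed.
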